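(* Let $\Theta$ be an MLL proof structure. If some run of Algorithm A on input $\Theta$ terminates in Step 5 with output no, then $\Theta$ is not an MLL proof net.
   Context: MLL formulas (with a single atom $p$) are given by $F ::= p \mid p^\bot \mid F\otimes G \mid F \wp G$, where $\wp$ denotes par. MLL links are: an ID-link, with two conclusions $p$ and $p^\bot$; a $\otimes$-link, with left premise $F$, right premise $G$ and conclusion $F\otimes G$; a $\wp$-link, with left premise $F$, right premise $G$ and conclusion $F\wp G$. An MLL proof structure $\Theta$ is a finite set of links such that each conclusion of a link is a premise of at most one other link, and each premise of a link is a conclusion of exactly one other link; a conclusion of $\Theta$ is a formula occurrence that is not a premise of any link. MLL proof nets are defined inductively: a single ID-link is a proof net; if $\Theta_1,\Theta_2$ are disjoint proof nets with conclusions $F$, $G$, adding a $\otimes$-link with premises $F,G$ gives a proof net; if $\Theta$ is a proof net with conclusions $F,G$, adding a $\wp$-link with left premise $F$ and right premise $G$ gives a proof net. Extreme-left DR-graph $S_{\forall\ell}(\Theta)$: the undirected graph on formula occurrences in which each ID-link joins its two conclusions, each $\otimes$-link joins its conclusion to both premises, and each $\wp$-link joins its conclusion to its left premise only. deNM-trees: finite trees with labeled nodes (carrying a label set of symbols $\ell_L$, $r_L$, $L$ a $\wp$-link) and $\wp$-nodes (labeled by a $\wp$-link $L$, of degree 1 or 2, with a port ''above'' and a port ''below''; a degree-1 $\wp$-node is attached only through its port above). Translation $T(\Theta)$ (undefined unless $S_{\forall\ell}(\Theta)$ is a tree). If $\Theta$ is a single ID-link, $T(\Theta)$ is one degree-0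 labeled node with label set $\emptyset$. Otherwise each link $L$ gives a piece: (i) ID-link, case 1: one conclusion $F$ is the right premise of a $\wp$-link $L'$ or a conclusion of $\Theta$; if $F^\bot$ is a premise of a $\wp$-link, $T(\Theta)$ is undefined; otherwise a degree-1 labeled node attached to the piece of the link having $F^\bot$ as premise, labeled $\{r_{L'}\}$ if $F$ is the right premise of $L'$ and $\emptyset$ otherwise. Case 2 (otherwise): if both conclusions are premises of $\wp$-links, undefined; otherwise a degree-2 labeled node attached to the pieces of the links having the conclusions as premises, labeled $\{\ell_{L'}\}$ if a conclusion is the left premise of a $\wp$-link $L'$, else $\emptyset$. (ii) $\otimes$-link, case 1 (conclusion is a conclusion of $\Theta$ or right premise of a $\wp$-link $L'$): a degree-2 labeled node attached to the pieces of the links producing its premises, labeled $\{r_{L'}\}$ or $\emptyset$ accordingly; case 2 (otherwise): a degree-3 labeled node attached additionally to the piece of the link having its conclusion as premise, labeled $\{\ell_{L'}\}$ if the conclusion is the left premise of a $\wp$-link $L'$, else $\emptyset$. (iii) $\wp$-link $L$: a $\wp$-node $n_L$ whose port above is attached to the piece of the link producing the left premise of $L$; case 1 (conclusion is the right premise of $\wp$-link $L'$): port below attached to a degree-1 labeled node labeled $\{r_{L'}\}$; case 2 (conclusion is the left premise of $\wp$-link $L'$): port below attached to a degree-2 labeled node labeled $\{\ell_{L'}\}$ which is attached to the port above of $n_{L'}$; case 3 (otherwise): only $n_L$, of degree 1 if its conclusion is a conclusion of $\Theta$, else its port below is attached to the piece of the link having its conclusion as premise. $T(\Theta)$ connects all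 pieces. Rewriting with one designated active labeled node: ($\wp$-elimination) if the active node $n$ is adjacent to a $\wp$-node $n_L$ through $n_L$'s port above and $n$'s label set contains $\ell_L$ and $r_L$, delete $n_L$ (its neighbour through the port below, if any, becomes adjacent to $n$); (union) if the active node is adjacent to a labeled node, merge them into one active node labeled by the union of label sets; (local jump) if the active node is adjacent to a $\wp$-node $n_L$ through $n_L$'s port below, the active node becomes the labeled node whose label set contains $r_L$ (tree unchanged). $S_{\rm full}$ is the set of all $\ell_L, r_L$ for $\wp$-links $L$ of $\Theta$. Algorithm A on input $\Theta$: (1) if $T(\Theta)$ is undefined, output no; (2) select an arbitrary labeled node as active; (3) rewrite using the three rules (in any order); (4) if local jump is applied to a $\wp$-node to which it was already applied, output no; (5) when no rule applies to the current tree $T'$, output yes if $T'$ is exactly one degree-0 node with label set $S_{\rm full}$, and no otherwise. *)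

(* Defs.v *)
From mathcomp Require Import all_boot.
From Stdlib Require Permutation.

Set Implicit Arguments.
Unset Strict Implicit.
Unset Printing Implicit Defensive.

Inductive formula : Type :=
  | Atom
  | NegAtom
  | Tens of formula & formula
  | Par of formula & formula.

(* Formula occurrences are named by natural numbers; a labelling
   [lab : nat -> formula] gives the formula of each occurrence.       *)
Inductive link : Type :=
  | IDL of nat & nat              (* IDL a b : conclusions a : p, b : p^bot *)
  | TensL of nat & nat & nat
  | ParL of nat & nat & nat.

Definition concls (L : link) : seq nat :=
  match L with IDL a b => [:: a; b] | TensL _ _ c => [:: c] | ParL _ _ c => [:: c] end.
Definition prems (L : link) : seq nat :=
  match L with IDL _ _ => [::] | TensL l r _ => [:: l; r] | ParL l r _ => [:: l; r] end.
Definition isPar (L : link) : bool := if L is ParL _ _ _ then true else false.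
(* a name for each link: the p-conclusion of an ID link, the conclusion otherwise *)
Definition key (L : link) : nat :=
  match L with IDL a _ => a | TensL _ _ c => c | ParL _ _ c => c end.

(* all formula occurrences of a set of links (= all link conclusions) *)
Definition occs (ls : seq link) : seq nat := flatten (map concls ls).
Definition allprems (ls : seq link) : seq nat := flatten (map prems ls).

Definition typed (lab : nat -> formula) (L : link) : Prop :=
  match L with
  | IDL a b => lab a = Atom /\ lab b = NegAtom
  | TensL l r c => lab c = Tens (lab l) (lab r)
  | ParL l r c => lab c = Par (lab l) (lab r)
  end.

(* MLL proof structure: a finite set of (well typed) links such that each
   occurrence is the conclusion of exactly one link, each conclusion is a
   premise of at most one link, and each premise is a conclusion of exactly
   one other link. *)
Definition proof_structure (ls : seq link) (lab : nat -> formula) : Prop :=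
  [/\ uniq (occs ls),
      uniq (allprems ls),
      all (fun L => all (fun x => (x \in occs ls) && (x \notin concls L)) (prems L)) ls
    & forall L, List.In L ls -> typed lab L].

Definition pconcls (ls : seq link) : seq nat :=
  [seq x <- occs ls | x \notin allprems ls].

(* MLL proof nets, inductively (links form a set: closed under permutation). *)
Inductive is_net (lab : nat -> formula) : seq link -> Prop :=
  | net_ax a b : a != b -> lab a = Atom -> lab b = NegAtom -> is_net lab [:: IDL a b]
  | net_tens s1 s2 l r c :
      is_net lab s1 -> is_net lab s2 ->
      (forall x, x \in occs s1 -> x \notin occs s2) ->
      l \in pconcls s1 -> r \in pconcls s2 ->
      c \notin occs s1 -> c \notin occs s2 ->
      lab c = Tens (lab l) (lab r) ->
      is_net lab (TensL l r c :: s1 ++ s2)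
  | net_par s l r c :
      is_net lab s ->
      l \in pconcls s -> r \in pconcls s -> l != r ->
      c \notin occs s ->
      lab c = Par (lab l) (lab r) ->
      is_net lab (ParL l r c :: s)
  | net_perm s s' : Permutation.Permutation s s' -> is_net lab s -> is_net lab s'.

(* Extreme-left DR-graph and tree-ness.                                 *)
Definition sl_adj (ls : seq link) (x y : nat) : bool :=
  has (fun L => match L with
                | IDL a b => ((x == a) && (y == b)) || ((x == b) && (y == a))
                | TensL l r c => ((x == c) && ((y == l) || (y == r)))
                                 || ((y == c) && ((x == l) || (x == r)))
                | ParL l _ c => ((x == c) && (y == l)) || ((y == c) && (x == l))
                end) ls.

Definition is_tree (V : seq nat) (e : rel nat) : Prop :=
  [/\ V != [::],
      (forall x y, x \in V -> y \in V -> exists p, path e x p /\ last x p = y)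
    & ~ (exists s : seq nat, [/\ 3 <= size s, uniq s, all (mem V) s & cycle e s])].

Definition SL_is_tree (ls : seq link) : Prop := is_tree (occs ls) (sl_adj ls).

(* Node names: inl k = the labelled node of the ID/tensor link with key k;
               inr c = the extra labelled node created for the par link with
                       conclusion c.  Par-nodes are named by (the conclusion
                       of) their par link.
   Label symbols: inl c = l_L, inr c = r_L for the par link L of conclusion c. *)
Definition nid := (nat + nat)%type.
Definition sym := (nat + nat)%type.
Definition ell (c : nat) : sym := inl c.
Definition rgt (c : nat) : sym := inr c.

Record deNM := mkT {
  LN   : seq nid;
  lbl  : nid -> seq sym;
  PN   : seq nat;
  up   : nat -> nid;          (* neighbour through the port above *)
  down : nat -> option nid;   (* neighbour through the port below, if any *)
  ladj : nid -> nid -> bool   (* adjacency between labelled nodes *)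
}.

Section Translation.
Variable ls : seq link.

Definition producer (x : nat) : option link := ohead [seq L <- ls | x \in concls L].
Definition consumer (x : nat) : option link := ohead [seq L <- ls | x \in prems L].

Definition is_right_par_prem (x : nat) : bool :=
  if consumer x is Some (ParL _ r _) then x == r else false.
Definition is_par_prem (x : nat) : bool :=
  if consumer x is Some (ParL _ _ _) then true else false.
Definition is_concl (x : nat) : bool := if consumer x is None then true else false.

Definition labelOf (x : nat) : seq sym :=
  match consumer x with
  | Some (ParL l _ c) => if x == l then [:: ell c] else [:: rgt c]
  | _ => [::]
  end.

(* the node of the piece of the producer of x through which x is attached below *)
Definition node_for (x : nat) : nid :=
  match producer x with
  | Some (ParL _ _ p) => inr p
  | Some L => inl (key L)
  | None => inl x
  end.

(* ID-link side conditions of the translation (cases 1 and 2) *)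
Definition id_ok (a b : nat) : bool :=
  let rc x := is_right_par_prem x || is_concl x in
  if rc a then ~~ is_par_prem b
  else if rc b then ~~ is_par_prem a
  else ~~ (is_par_prem a && is_par_prem b).

Definition ids_ok : bool :=
  all (fun L => if L is IDL a b then id_ok a b else true) ls.

Definition T_LN : seq nid :=
  [seq inl (key L) | L <- ls & ~~ isPar L] ++
  [seq inr (key L) | L <- ls & isPar L && is_par_prem (key L)].

Definition T_lbl (n : nid) : seq sym :=
  match n with
  | inl k => if producer k is Some L then flatten [seq labelOf x | x <- concls L] else [::]
  | inr p => labelOf p
  end.

Definition T_PN : seq nat := [seq key L | L <- ls & isPar L].

Definition T_up (c : nat) : nid :=
  if producer c is Some (ParL l _ _) then node_for l else inl c.

Definition T_down (c : nat) : option nid :=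
  match consumer c with
  | Some (ParL _ _ _) => Some (inr c)
  | Some (TensL _ _ t) => Some (inl t)
  | _ => None
  end.

Definition T_ladj (u v : nid) : bool :=
  has (fun x => match consumer x, producer x with
                | Some (TensL _ _ t), Some L =>
                    ~~ isPar L &&
                    (((u == inl (key L)) && (v == inl t)) || ((v == inl (key L)) && (u == inl t)))
                | _, _ => false
                end) (occs ls).

End Translation.

(* T(Theta): [T_defined ls] says the translation is defined (Step 1),
   and then [T_tree ls] is the translated deNM-tree. *)
Definition T_defined (ls : seq link) : Prop :=
  (exists a b, ls = [:: IDL a b]) \/ (SL_is_tree ls /\ ids_ok ls).

Definition T_tree (ls : seq link) : deNM :=
  match ls with
  | [:: IDL a _] =>  (* one degree-0 labelled node with empty label set *)
      mkT [:: inl a] (fun _ => [::]) [::] (fun c => inl c) (fun _ => None) (fun _ _ => false)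
  | _ => mkT (T_LN ls) (T_lbl ls) (T_PN ls) (T_up ls) (T_down ls) (T_ladj ls)
  end.

Definition S_full (ls : seq link) : seq sym :=
  [seq ell (key L) | L <- ls & isPar L] ++ [seq rgt (key L) | L <- ls & isPar L].

Definition par_elim (t : deNM) (a : nid) (t' : deNM) : Prop :=
  exists L, [/\ L \in PN t, up t L = a, ell L \in lbl t a, rgt L \in lbl t a &
    t' = mkT (LN t) (lbl t) [seq L' <- PN t | L' != L] (up t) (down t)
             (fun u v => ladj t u v ||
                 (if down t L is Some m then ((u == a) && (v == m)) || ((u == m) && (v == a))
                  else false))].

Definition merge (t : deNM) (a b : nid) : deNM :=
  let ren x := if x == b then a else x in
  mkT [seq n <- LN t | n != b]
      (fun n => if n == a then lbl t a ++ lbl t b else lbl t n)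
      (PN t)
      (fun L => ren (up t L))
      (fun L => omap ren (down t L))
      (fun u v => [&& u != b, v != b, u != v &
                     ladj t u v || ((u == a) && ladj t b v) || ((v == a) && ladj t u b)]).

Definition union_rule (t : deNM) (a : nid) (t' : deNM) : Prop :=
  exists b, [/\ b \in LN t, b != a, ladj t a b & t' = merge t a b].

(* local jump on the par-node L: the tree is unchanged, the active node
   moves from a to b *)
Definition local_jump (t : deNM) (a : nid) (L : nat) (b : nid) : Prop :=
  [/\ L \in PN t, down t L = Some a, b \in LN t & rgt L \in lbl t b].

Definition stuck (t : deNM) (a : nid) : Prop :=
  [/\ ~ (exists t', par_elim t a t'),
      ~ (exists t', union_rule t a t')
    & ~ (exists L b, local_jump t a L b)].

(* partial runs of Step 3 from (t0, a0), never applying local jump twice to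
   the same par-node (otherwise Step 4 would output no); J records the
   par-nodes on which local jump has been applied *)
Inductive run (t0 : deNM) (a0 : nid) : deNM -> nid -> seq nat -> Prop :=
  | run_start : run t0 a0 t0 a0 [::]
  | run_elim t a J t' : run t0 a0 t a J -> par_elim t a t' -> run t0 a0 t' a J
  | run_union t a J t' : run t0 a0 t a J -> union_rule t a t' -> run t0 a0 t' a J
  | run_jump t a J L b : run t0 a0 t a J -> local_jump t a L b -> L \notin J ->
                         run t0 a0 t b (L :: J).

(* Step 5 "yes" condition: exactly one degree-0 node, with label set S_full *)
Definition accepting (ls : seq link) (t : deNM) : Prop :=
  exists n, [/\ LN t = [:: n], PN t = [::] & lbl t n =i S_full ls].

Definition algoA_no_at_step5 (ls : seq link) : Prop :=
  T_defined ls /\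
  exists a0 t a J, [/\ a0 \in LN (T_tree ls), run (T_tree ls) a0 t a J, stuck t a
                     & ~ accepting ls t].

(* Main.v *)
Require Import Defs.
From mathcomp Require Import all_boot.
From Stdlib Require Import Relations.
From Stdlib Require Permutation.

Set Implicit Arguments.
Unset Strict Implicit.
Unset Printing Implicit Defensive.



Lemma In_filter (T : Type) (p : pred T) (s : seq T) x :
  List.In x (filter p s) -> List.In x s /\ p x.
Proof.
elim: s => //= y s IH; case: ifP => py /=.
  by case=> [<-|/IH [H1 H2]]; [split; [left|]|split; [right|]].
by move/IH=> [H1 H2]; split; [right|].
Qed.

Lemma ohead_In (T : Type) (s : seq T) x : ohead s = Some x -> List.In x s.
Proof. by case: s => //= y s [->]; left. Qed.

Lemma ohead_filter_uniq (T : Type) (p : pred T) (s : seq T) x :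
  List.In x s -> p x -> (forall y, List.In y s -> p y -> y = x) ->
  ohead (filter p s) = Some x.
Proof.
elim: s => //= y s IH Hx px Hu; case: ifP => py /=.
  by rewrite (Hu y) //; left.
case: Hx => [Hy|Hx]; first by subst y; rewrite px in py.
apply: IH => // z Hz pz; apply: Hu => //; by right.
Qed.

Lemma map_In (T1 : Type) (T2 : eqType) (f : T1 -> T2) (s : seq T1) y :
  y \in map f s -> exists x, List.In x s /\ y = f x.
Proof.
elim: s => //= x s IH; rewrite in_cons => /orP [/eqP ->|/IH [z [Hz ->]]].
  by exists x; split => //; left.
by exists z; split => //; right.
Qed.

Lemma In_map_mem (T1 : Type) (T2 : eqType) (f : T1 -> T2) (s : seq T1) x :
  List.In x s -> f x \in map f s.
Proof.
elim: s => //= y s IH [->|H]; rewrite in_cons; first by rewrite eqxx.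
by rewrite IH ?orbT.
Qed.

Lemma In_filter_mem (T1 : Type) (T2 : eqType) (f : T1 -> T2) (p : pred T1) (s : seq T1) x :
  List.In x s -> p x -> f x \in map f (filter p s).
Proof.
move=> H px; elim: s H => //= y s IH [->|H]; first by rewrite px /= in_cons eqxx.
by case: ifP => _ //=; rewrite ?in_cons IH ?orbT.
Qed.

Lemma mem_occs ls x : x \in occs ls <-> exists L, List.In L ls /\ x \in concls L.
Proof.
elim: ls => [|L ls IH] /=; first by split => // [[L [[]]]].
rewrite /occs /= mem_cat -/(occs ls); split.
  case/orP => [H|/IH [L' [H1 H2]]]; first by exists L; split => //; left.
  by exists L'; split => //; right.
case=> L' [[<-|H1] H2]; first by rewrite H2.
by apply/orP; right; apply/IH; exists L'.
Qed.

Lemma mem_allprems ls x : x \in allprems ls <-> exists L, List.In L ls /\ x \in prems L.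
Proof.
elim: ls => [|L ls IH] /=; first by split => // [[L [[]]]].
rewrite /allprems /= mem_cat -/(allprems ls); split.
  case/orP => [H|/IH [L' [H1 H2]]]; first by exists L; split => //; left.
  by exists L'; split => //; right.
case=> L' [[<-|H1] H2]; first by rewrite H2.
by apply/orP; right; apply/IH; exists L'.
Qed.

Lemma occs_uniq_link ls L1 L2 x : uniq (occs ls) -> List.In L1 ls -> List.In L2 ls ->
  x \in concls L1 -> x \in concls L2 -> L1 = L2.
Proof.
elim: ls => //= L ls IH; rewrite /occs /= cat_uniq -/(occs ls) => /and3P [_ Hd Hu].
have Hn : forall L', List.In L' ls -> x \in concls L -> x \in concls L' -> False.
  move=> L' HL' H1 H2; move/hasPn: Hd => Hd.
  have : x \in occs ls by apply/mem_occs; exists L'.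
  by move/Hd; rewrite H1.
case=> [<-|H1] [<-|H2] // c1 c2.
- by case: (Hn _ H2 c1 c2).
- by case: (Hn _ H1 c2 c1).
- by apply: IH.
Qed.

Lemma prems_uniq_link ls L1 L2 x : uniq (allprems ls) -> List.In L1 ls -> List.In L2 ls ->
  x \in prems L1 -> x \in prems L2 -> L1 = L2.
Proof.
elim: ls => //= L ls IH; rewrite /allprems /= cat_uniq -/(allprems ls) => /and3P [_ Hd Hu].
have Hn : forall L', List.In L' ls -> x \in prems L -> x \in prems L' -> False.
  move=> L' HL' H1 H2; move/hasPn: Hd => Hd.
  have : x \in allprems ls by apply/mem_allprems; exists L'.
  by move/Hd; rewrite H1.
case=> [<-|H1] [<-|H2] // c1 c2.
- by case: (Hn _ H2 c1 c2).
- by case: (Hn _ H1 c2 c1).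
- by apply: IH.
Qed.

Lemma prems_uniq_of ls L : uniq (allprems ls) -> List.In L ls -> uniq (prems L).
Proof.
elim: ls => //= L' ls IH; rewrite /allprems /= cat_uniq -/(allprems ls) => /and3P [H1 _ H2].
by case=> [<-|H] //; apply: IH.
Qed.



Definition V := (nid + nat)%type.

Definition Eg (t : deNM) (sg : nat -> nid) (x y : V) : bool :=
  match x, y with
  | inl u, inl v => ladj t u v || ladj t v u
  | inl u, inr L => (L \in PN t) && ((down t L == Some u) || (sg L == u))
  | inr L, inl u => (L \in PN t) && ((down t L == Some u) || (sg L == u))
  | inr _, inr _ => false
  end.

Definition valid (t : deNM) (sg : nat -> nid) : Prop :=
  forall L, L \in PN t -> sg L = up t L \/ (sg L \in LN t /\ rgt L \in lbl t (sg L)).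

Definition verts (t : deNM) (x : V) : bool :=
  match x with inl u => u \in LN t | inr L => L \in PN t end.

Definition CR (e : V -> V -> bool) := clos_refl_sym_trans V (fun x y => e x y).

Definition Conn (t : deNM) : Prop :=
  forall sg, valid t sg -> forall x y, verts t x -> verts t y -> CR (Eg t sg) x y.

Record InvT (ls : seq link) (t : deNM) : Prop := {
  i2 : uniq (LN t);
  i3 : forall L, L \in PN t -> ell L \in lbl t (up t L);
  i4 : forall s, s \in S_full ls <-> exists2 n, n \in LN t & s \in lbl t n;
  i5 : forall L, L \in PN t -> rgt L \in S_full ls;
  i6 : forall u v, ladj t u v = ladj t v u;
  i7 : forall u v, ladj t u v -> u \in LN t;
  i8 : forall L m, L \in PN t -> down t L = Some m -> m \in LN t;
  i9 : Conn t
}.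

Lemma CR_map (e e' : V -> V -> bool) (f : V -> V) :
  (forall u v, e u v -> f u = f v \/ e' (f u) (f v)) ->
  forall x y, CR e x y -> CR e' (f x) (f y).
Proof.
move=> H x y; elim=> {x y}.
- by move=> x y /H [->|h]; [apply: rst_refl|apply: rst_step].
- by move=> x; apply: rst_refl.
- by move=> x y _ IH; apply: rst_sym.
- by move=> x y z _ IH1 _ IH2; apply: rst_trans IH2.
Qed.

Lemma CR_iso (e : V -> V -> bool) c :
  (forall v, e c v \/ e v c -> v = c) -> forall x y, CR e x y -> (x = c <-> y = c).
Proof.
move=> H x y; elim=> {x y}.
- move=> x y exy; split=> E; subst; apply: H; by [left|right].
- by [].
- by move=> x y _ [].
- by move=> x y z _ [h1 h2] _ [h3 h4]; split => ?; auto.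
Qed.

Section Pres.
Variable ls : seq link.

Lemma pres_elim t a t' : InvT ls t -> a \in LN t -> par_elim t a t' -> InvT ls t'.
Proof.
move=> I aL [L0 [L0P upa ela rga ->]].
set X := (fun u v : nid => if down t L0 is Some m then ((u == a) && (v == m)) || ((u == m) && (v == a)) else false).
have PNs : forall L, L \in [seq L' <- PN t | L' != L0] -> L \in PN t /\ L != L0.
  by move=> L; rewrite mem_filter => /andP [-> ->].
constructor => /=.
- exact: (i2 I).
- by move=> L /PNs [/(i3 I)].
- exact: (i4 I).
- by move=> L /PNs [/(i5 I)].
- move=> u v; rewrite (i6 I); congr orb; rewrite /X; case: (down t L0) => // m.
  by case: (u == a); case: (v == m); case: (u == m); case: (v == a).
- move=> u v /orP [/(i7 I)//|]; rewrite /X; case E: (down t L0) => [m|] //.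
  case/orP => /andP [/eqP -> _] //; exact: (i8 I L0P E).
- by move=> L m /PNs [H _]; apply: (i8 I H).
- move=> sg' Hv x y Hx Hy.
  pose sg L := if L == L0 then up t L0 else sg' L.
  have Hsg : valid t sg.
    move=> L HL; rewrite /sg; case: eqP => [->|/eqP ne]; first by left.
    have HL' : L \in [seq L' <- PN t | L' != L0] by rewrite mem_filter ne.
    exact: Hv.
  pose f (x : V) : V := if x == inr L0 then inl a else x.
  have fx : forall x, verts (mkT (LN t) (lbl t) [seq L' <- PN t | L' != L0] (up t) (down t)
        (fun u v => ladj t u v || X u v)) x -> verts t x /\ f x = x.
    case=> [u|L] /=; first by move=> ->.
    by move/PNs => [-> ne]; split => //; rewrite /f; case: eqP => // [[E]]; rewrite E eqxx in ne.
  case: (fx _ Hx) => Hx1 <-; case: (fx _ Hy) => Hy1 <-.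
  apply: (CR_map _ (i9 I Hsg Hx1 Hy1)).
  have key : forall u L, ((L \in PN t) && ((down t L == Some u) || (sg L == u))) ->
     (inr L == inr L0 :> V) /\ (u = a \/ (if down t L0 is Some m then u == m else false))
     \/ ((L \in [seq L' <- PN t | L' != L0]) && ((down t L == Some u) || (sg' L == u))).
    move=> u L /andP [HL H]; case: (eqVneq L L0) => [E|ne].
      subst L; left; split => //; move: H; rewrite /sg eqxx upa.
      case/orP => [/eqP ->|/eqP ->]; [right|left] => //.
    right; rewrite mem_filter ne HL /=; move: H; by rewrite /sg (negbTE ne).
  have fl : forall u, f (inl u) = inl u by [].
  have fr : forall L, L != L0 -> f (inr L) = inr L.
    by move=> L ne; rewrite /f; case: eqP => // [[E]]; rewrite E eqxx in ne.
  case=> [u|L] [v|M] //= H.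
  + by right; rewrite /f /=; case/orP: H => ->; rewrite ?orbT.
  + case: (key _ _ H) => [[E [ua|um]]|H'].
    * by left; rewrite /f E ua.
    * right; rewrite /f E /= /X; case: (down t L0) um => // m /eqP ->.
      by rewrite !eqxx /= !orbT.
    * right; have ne : M != L0 by move: H'; rewrite mem_filter => /andP [/andP [->]].
      by rewrite (fr _ ne) /= H'.
  + case: (key _ _ H) => [[E [ua|um]]|H'].
    * by left; rewrite /f E ua.
    * right; rewrite /f E /= /X; case: (down t L0) um => // m /eqP ->.
      by rewrite !eqxx /= orbT.
    * right; have ne : L != L0 by move: H'; rewrite mem_filter => /andP [/andP [->]].
      by rewrite (fr _ ne) /= H'.
Qed.


Definition renf (a b x : nid) := if x == b then a else x.
Lemma merge_eq (t : deNM) (a b : nid) : Defs.merge t a b = mkT [seq n <- LN t | n != b]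
   (fun n => if n == a then lbl t a ++ lbl t b else lbl t n) (PN t)
   (fun L => renf a b (up t L)) (fun L => omap (renf a b) (down t L))
   (fun u v => [&& u != b, v != b, u != v &
                     ladj t u v || ((u == a) && ladj t b v) || ((v == a) && ladj t u b)]).
Proof. by []. Qed.

Lemma pres_union t a t' : InvT ls t -> a \in LN t -> union_rule t a t' -> InvT ls t'.
Proof.
move=> I aL [b [bL ba ab ->]]; rewrite merge_eq.
pose ren := renf a b.
have ab' : a != b by rewrite eq_sym.
have LNs : forall n, n \in [seq n <- LN t | n != b] -> n \in LN t /\ n != b.
  by move=> n; rewrite mem_filter => /andP [-> ->].
have LNin : forall n, n \in LN t -> n != b -> n \in [seq n <- LN t | n != b].
  by move=> n H1 H2; rewrite mem_filter H1 H2.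
have renb : ren b = a by rewrite /ren /renf eqxx.
have renn : forall n, n != b -> ren n = n by move=> n ne; rewrite /ren /renf (negbTE ne).
have renLN : forall n, n \in LN t -> ren n \in [seq n <- LN t | n != b].
  move=> n nL; case: (eqVneq n b) => [->|ne]; first by rewrite renb LNin.
  by rewrite renn // LNin.
constructor => /=.
- by apply: filter_uniq; exact: (i2 I).
- move=> L LP; have := i3 I LP; rewrite -/ren.
  case: (eqVneq (up t L) b) => [->|ne] H.
    by rewrite renb eqxx mem_cat H orbT.
  rewrite renn //; case: eqP => [E|_] //.
  by rewrite mem_cat -E H.
- move=> s; rewrite (i4 I); split.
    case=> n nL sn; case: (eqVneq n b) => [E|ne].
      by exists a; rewrite ?LNin // eqxx mem_cat -E sn orbT.
    exists n; first by rewrite LNin.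
    by case: eqP => [E|//]; rewrite mem_cat -E sn.
  case=> n /LNs [nL nb]; case: eqP => [_|_ sn]; last by exists n.
  by rewrite mem_cat => /orP [H|H]; [exists a|exists b].
- exact: (i5 I).
- move=> u v; rewrite (i6 I u v) (i6 I b v) (i6 I u b).
  by case: (u == b); case: (v == b); rewrite ?andbF //= eq_sym;
     case: (v == u); rewrite //= orbAC.
- move=> u v /and4P [ub _ _ /orP [/orP [/(i7 I) H|/andP [/eqP -> _]]|/andP [_ /(i7 I) H]]];
    by rewrite LNin.
- move=> L m LP; case E: (down t L) => [m0|] //= [<-].
  by apply: renLN; apply: (i8 I LP E).
- move=> sg' Hv x y Hx Hy.
  pose sg L := if sg' L == ren (up t L) then up t L
               else if sg' L == a then (if rgt L \in lbl t a then a else b) else sg' L.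
  have Hsg : valid t sg /\ forall L, L \in PN t -> ren (sg L) = sg' L.
    have H : forall L, L \in PN t -> (sg L = up t L \/ (sg L \in LN t /\ rgt L \in lbl t (sg L)))
                                       /\ ren (sg L) = sg' L.
      move=> L LP; rewrite /sg; case: (eqVneq (sg' L) (ren (up t L))) => [->|ne1].
        by split => //; left.
      case: (Hv L LP) => [/= E|[/= /LNs [H1 H2]]]; first by rewrite E eqxx in ne1.
      case: (eqVneq (sg' L) a) => [->|ne2].
        rewrite mem_cat; case: ifP => [Ha _|Ha /= Hb].
          by split; [right|rewrite renn].
        by split; [right|].
      move=> H3; split; [right|rewrite renn] => //.
    by split => L LP; case: (H L LP).
  case: Hsg => Hsg Hren.
  pose f (x : V) : V := if x is inl u then inl (ren u) else x.
  have fx : forall x, verts (Defs.merge t a b) x -> verts t x /\ f x = x.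
    case=> [u|L] //= /LNs [uL ub]; by rewrite renn.
  case: (fx _ Hx) => Hx1 <-; case: (fx _ Hy) => Hy1 <-.
  apply: (CR_map _ (i9 I Hsg Hx1 Hy1)).
  have keyp : forall u L, (L \in PN t) && ((down t L == Some u) || (sg L == u)) ->
     (L \in PN t) && ((omap ren (down t L) == Some (ren u)) || (sg' L == ren u)).
    move=> u L /andP [LP /orP [/eqP ->|/eqP <-]]; rewrite LP /= ?eqxx //.
    by rewrite Hren // eqxx orbT.
  case=> [u|L] [v|M] //= H.
  + case: (eqVneq (ren u) (ren v)) => [->|ne]; [by left|right].
    have H' : ladj t u v by case/orP: H => // /[1! (i6 I)].
    have ub : ren u != b by rewrite /ren /renf; case: (eqVneq u b).
    have vb : ren v != b by rewrite /ren /renf; case: (eqVneq v b).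
    apply/orP; left; rewrite ub vb /=.
    move: ub vb ne; rewrite /ren /renf.
    case: (eqVneq u b) => [E|ub]; case: (eqVneq v b) => [E'|vb] //= _ _.
    * by rewrite eqxx.
    * by move=> _; rewrite eqxx -E H' orbT.
    * by move=> _; rewrite eqxx -E' H' !orbT.
    * by rewrite H'.
  + by right; rewrite keyp.
  + by right; rewrite keyp.
Qed.

Lemma pres_jump t a L b : local_jump t a L b -> b \in LN t.
Proof. by case. Qed.

Lemma run_inv t0 a0 t a J : InvT ls t0 -> a0 \in LN t0 -> run t0 a0 t a J ->
  InvT ls t /\ a \in LN t.
Proof.
move=> I0 a0L; elim=> {t a J}.
- by [].
- move=> t a J t' _ [I aL] H; split; first exact: (pres_elim I aL H).
  by case: H => L [_ _ _ _ ->].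
- move=> t a J t' _ [I aL] H; split; first exact: (pres_union I aL H).
  by case: H => b [bL ba _ ->] /=; rewrite mem_filter eq_sym ba.
- by move=> t a J L b _ [I aL] H _; split => //; exact: pres_jump H.
Qed.

Lemma uniq_single (T : eqType) (s : seq T) a : uniq s -> a \in s -> (forall x, x \in s -> x = a) -> s = [:: a].
Proof.
case: s => [//|x s] /= /andP [xs us] _ H.
have xa : x = a by apply: H; rewrite mem_head.
subst x; case: s xs us H => [//|y s] /= ys _ H.
have : y = a by apply: H; rewrite !in_cons eqxx orbT.
by move=> E; rewrite E in_cons eqxx in ys.
Qed.

Lemma stuck_accept t a : InvT ls t -> a \in LN t -> stuck t a -> accepting ls t.
Proof.
move=> I aL [nE nU nJ].
have pick : forall L, L \in PN t -> exists2 b, b \in LN t & rgt L \in lbl t b.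
  by move=> L LP; apply/(i4 I); apply: (i5 I).
pose sg L := if up t L != a then up t L
             else nth a (LN t) (find (fun b => rgt L \in lbl t b) (LN t)).
have Hsg : valid t sg.
  move=> L LP; rewrite /sg; case: ifP => _; first by left.
  right; case: (pick L LP) => b bL rb.
  have hs : has (fun b => rgt L \in lbl t b) (LN t) by apply/hasP; exists b.
  by split; [apply: mem_nth; rewrite -has_find|apply: (nth_find a hs)].
have iso : forall v, Eg t sg (inl a) v \/ Eg t sg v (inl a) -> v = inl a.
  have H : forall v, Eg t sg (inl a) v -> v = inl a.
    case=> [u|L] /= H.
      have H' : ladj t a u by case/orP: H => // /[1! (i6 I)].
      case: (eqVneq u a) => [->//|ne]; exfalso; apply: nU.
      exists (Defs.merge t a u), u; split => //.
      by rewrite (i6 I) in H'; apply: (i7 I H').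
    exfalso; case/andP: H => LP /orP [/eqP E|/eqP E].
      by case: (pick L LP) => b bL rb; apply: nJ; exists L, b.
    move: E; rewrite /sg; case: ifP => [ne E|/negbFE/eqP ua E].
      by rewrite E eqxx in ne.
    apply: nE; eexists; exists L; split; [exact: LP|exact: ua|rewrite -ua; exact: (i3 I LP)| |reflexivity].
    case: (pick L LP) => b bL rb.
    have hs : has (fun b => rgt L \in lbl t b) (LN t) by apply/hasP; exists b.
    by have := nth_find a hs; rewrite E.
  move=> v [/H //|]; case: v => [u|L] /= H'; apply: H => /=; first by rewrite orbC.
  exact: H'.
have all1 : forall x, verts t x -> x = inl a.
  move=> x vx; have := i9 I Hsg (aL : verts t (inl a)) vx.
  by move/(CR_iso iso) => [H _]; apply: H.
exists a; split.
- apply: uniq_single => //; first exact: (i2 I).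
  by move=> x xL; case: (all1 (inl x) xL).
- case E: (PN t) => [//|L s]; have : verts t (inr L) by rewrite /= E mem_head.
  by move/all1.
- move=> s; apply/idP/idP => [H|/(i4 I) [n nL sn]].
    by apply/(i4 I); exists a.
  by case: (all1 (inl n) nL) => <-.
Qed.

End Pres.



Definition drL (s : nat -> bool) (L : link) (x y : nat) : bool :=
  match L with
  | IDL a b => ((x == a) && (y == b)) || ((x == b) && (y == a))
  | TensL l r c => ((x == c) && ((y == l) || (y == r))) || ((y == c) && ((x == l) || (x == r)))
  | ParL l r c => let z := if s c then l else r in ((x == c) && (y == z)) || ((y == c) && (x == z))
  end.
Definition dr s ls (x y : nat) : Prop := exists L, List.In L ls /\ drL s L x y.
Definition CRN s ls := clos_refl_sym_trans nat (dr s ls).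

Lemma CRN_mono s ls ls' x y : (forall L, List.In L ls -> List.In L ls') ->
  CRN s ls x y -> CRN s ls' x y.
Proof.
move=> H; elim=> {x y}.
- by move=> x y [L [HL HD]]; apply: rst_step; exists L; split => //; apply: H.
- by move=> x; apply: rst_refl.
- by move=> x y _ IH; apply: rst_sym.
- by move=> x y z _ IH1 _ IH2; apply: rst_trans IH2.
Qed.

Lemma occs_cat s1 s2 : occs (s1 ++ s2) = occs s1 ++ occs s2.
Proof. by rewrite /occs map_cat flatten_cat. Qed.

Lemma edge s ls L x y : List.In L ls -> drL s L x y -> CRN s ls x y.
Proof. by move=> H1 H2; apply: rst_step; exists L. Qed.

Lemma net_conn lab ls : is_net lab ls -> forall s x y, x \in occs ls -> y \in occs ls -> CRN s ls x y.
Proof.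
elim=> {ls}.
- move=> a b _ _ _ s x y; rewrite /occs /= !in_cons !orbF.
  have ab : CRN s [:: IDL a b] a b by apply: (@edge _ _ (IDL a b)); [left|rewrite /= !eqxx].
  by case/orP => /eqP ->; case/orP => /eqP ->; (apply: rst_refl || exact: ab || (apply: rst_sym; exact: ab)).
- move=> s1 s2 l r c n1 IH1 n2 IH2 _ lp rp _ _ _ s x y.
  set ls := TensL l r c :: s1 ++ s2.
  have inc1 : forall L, List.In L s1 -> List.In L ls.
    by move=> L H; right; apply: List.in_or_app; left.
  have inc2 : forall L, List.In L s2 -> List.In L ls.
    by move=> L H; right; apply: List.in_or_app; right.
  have l1 : l \in occs s1 by move: lp; rewrite mem_filter => /andP [].
  have r2 : r \in occs s2 by move: rp; rewrite mem_filter => /andP [].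
  have toc : forall z, z \in occs ls -> CRN s ls z c.
    move=> z; rewrite /occs /= -/(occs (s1 ++ s2)) occs_cat in_cons mem_cat.
    case/orP => [/eqP ->|/orP [zi|zi]]; first by apply: rst_refl.
    + apply: (@rst_trans _ _ z l c).
        by apply: (CRN_mono inc1); apply: IH1.
      by apply: (@edge _ _ (TensL l r c)); [left|rewrite /= !eqxx /= orbT].
    + apply: (@rst_trans _ _ z r c).
        by apply: (CRN_mono inc2); apply: IH2.
      by apply: (@edge _ _ (TensL l r c)); [left|rewrite /= !eqxx /= !orbT].
  by move=> hx hy; eapply rst_trans; [exact: (toc _ hx)|apply: rst_sym; exact: (toc _ hy)].
- move=> s0 l r c n IH lp rp _ _ _ s x y.
  set ls := ParL l r c :: s0.
  have inc : forall L, List.In L s0 -> List.In L ls by move=> L H; right.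
  have l1 : l \in occs s0 by move: lp; rewrite mem_filter => /andP [].
  have r1 : r \in occs s0 by move: rp; rewrite mem_filter => /andP [].
  have toc : forall z, z \in occs ls -> CRN s ls z c.
    move=> z; rewrite /occs /= -/(occs s0) in_cons.
    case/orP => [/eqP ->|zi]; first by apply: rst_refl.
    apply: (@rst_trans _ _ z (if s c then l else r) c).
      by apply: (CRN_mono inc); apply: IH => //; case: (s c).
    by apply: (@edge _ _ (ParL l r c)); [left|rewrite /= !eqxx /= orbT].
  by move=> hx hy; eapply rst_trans; [exact: (toc _ hx)|apply: rst_sym; exact: (toc _ hy)].
- move=> s0 s' P n IH s x y hx hy.
  have mo : forall z, z \in occs s' -> z \in occs s0.
    move=> z /mem_occs [L [HL Hz]]; apply/mem_occs; exists L; split => //.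
    by apply: (Permutation.Permutation_in _ (Permutation.Permutation_sym P)).
  apply: (CRN_mono _ (IH s x y (mo _ hx) (mo _ hy))).
  by move=> L; apply: Permutation.Permutation_in.
Qed.



Lemma all_In (T : Type) (p : pred T) s x : all p s -> List.In x s -> p x.
Proof. elim: s => //= y s IH /andP [py ps] [<-|H] //; exact: IH. Qed.

Lemma key_concl L : key L \in concls L.
Proof. by case: L => * /=; rewrite mem_head. Qed.

Lemma prod_In ls x L : producer ls x = Some L -> List.In L ls /\ x \in concls L.
Proof. by move=> H; have [] := In_filter (ohead_In H). Qed.

Lemma cons_In ls x L : consumer ls x = Some L -> List.In L ls /\ x \in prems L.
Proof. by move=> H; have [] := In_filter (ohead_In H). Qed.

Lemma prod_of ls L x : uniq (occs ls) -> List.In L ls -> x \in concls L -> producer ls x = Some L.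
Proof.
move=> Hu HL Hx; apply: ohead_filter_uniq => // L' HL' Hx'.
exact: (occs_uniq_link Hu HL' HL Hx' Hx).
Qed.

Lemma cons_of ls L x : uniq (allprems ls) -> List.In L ls -> x \in prems L -> consumer ls x = Some L.
Proof.
move=> Hu HL Hx; apply: ohead_filter_uniq => // L' HL' Hx'.
exact: (prems_uniq_link Hu HL' HL Hx' Hx).
Qed.

Lemma occ_prod ls x : uniq (occs ls) -> x \in occs ls -> exists L, List.In L ls /\ producer ls x = Some L.
Proof.
move=> Hu /mem_occs [L [HL Hx]]; exists L; split => //; exact: prod_of.
Qed.

Lemma LN_nonpar ls L : List.In L ls -> ~~ isPar L -> inl (key L) \in T_LN ls.
Proof.
move=> HL HP; rewrite /T_LN mem_cat; apply/orP; left.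
exact: (@In_filter_mem _ _ (fun L => inl (key L)) (fun L => ~~ isPar L)).
Qed.

Lemma LN_par ls L : List.In L ls -> isPar L -> is_par_prem ls (key L) -> inr (key L) \in T_LN ls.
Proof.
move=> HL HP HQ; rewrite /T_LN mem_cat; apply/orP; right.
apply: (@In_filter_mem _ _ (fun L => inr (key L)) (fun L => isPar L && is_par_prem ls (key L))) => //.
by rewrite HP.
Qed.

Lemma LN_inv ls n : n \in T_LN ls ->
  (exists L, [/\ List.In L ls, ~~ isPar L & n = inl (key L)]) \/
  (exists L, [/\ List.In L ls, isPar L, is_par_prem ls (key L) & n = inr (key L)]).
Proof.
rewrite /T_LN mem_cat => /orP [H|H].
  case: (map_In H) => L [H1 ->]; case: (In_filter H1) => H2 H3.
  by left; exists L.
case: (map_In H) => L [H1 ->]; case: (In_filter H1) => H2 /andP [H3 H4].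
by right; exists L.
Qed.

Lemma PN_of ls L : List.In L ls -> isPar L -> key L \in T_PN ls.
Proof. by move=> HL HP; exact: (@In_filter_mem _ _ key (fun L => isPar L) ls L HL HP). Qed.

Lemma PN_inv ls c : c \in T_PN ls -> exists l r, List.In (ParL l r c) ls.
Proof.
move=> H; case: (map_In H) => L [H1 ->]; case: (In_filter H1) => H2 H3.
by case: L H1 H2 H3 => [a b|l r c'|l r c'] H1 H2 H3 //; exists l, r.
Qed.

Definition phi ls x : V :=
  match producer ls x with
  | Some (ParL _ _ p) => inr p
  | Some L => inl (inl (key L))
  | None => inl (inl x)
  end.

Lemma prems_occ ls lab L x : proof_structure ls lab -> List.In L ls -> x \in prems L -> x \in occs ls.
Proof.
case=> _ _ Ha _ HL Hx; have := all_In Ha HL => /allP /(_ x Hx) /andP [] //.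
Qed.

Lemma node_phi ls x : uniq (occs ls) -> x \in occs ls ->
  (exists P, [/\ List.In P ls, isPar P, key P = x, node_for ls x = inr x & phi ls x = inr x]) \/
  (exists P, [/\ List.In P ls, ~~ isPar P, node_for ls x = inl (key P),
                 phi ls x = inl (inl (key P)) & x \in concls P]).
Proof.
move=> Hu /(occ_prod Hu) [P [HP E]]; have [_ xc] := prod_In E.
rewrite /node_for /phi E; case: P HP E xc => [a b|l r c|l r c] HP E xc.
- by right; exists (IDL a b).
- by right; exists (TensL l r c).
- left; exists (ParL l r c); move: xc; rewrite /= in_cons orbF => /eqP ->; by split.
Qed.

Lemma phi_concl ls L x : uniq (occs ls) -> List.In L ls -> x \in concls L -> ~~ isPar L ->
  phi ls x = inl (inl (key L)).
Proof. by move=> Hu HL Hx HP; rewrite /phi (prod_of Hu HL Hx); case: L HL Hx HP. Qed.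

Lemma phi_par ls l r c : uniq (occs ls) -> List.In (ParL l r c) ls -> phi ls c = inr c.
Proof. by move=> Hu HL; rewrite /phi (@prod_of _ (ParL l r c)) //= mem_head. Qed.

Lemma labelOf_full ls x s : s \in labelOf ls x -> s \in S_full ls.
Proof.
rewrite /labelOf; case E: (consumer ls x) => [[a b|l r c|l r c]|] //.
have [HL _] := cons_In E; rewrite /S_full mem_cat.
case: ifP => _; rewrite in_cons orbF => /eqP ->; apply/orP; [left|right].
- exact: (@In_filter_mem _ _ (fun L => ell (key L)) (fun L => isPar L) ls _ HL).
- exact: (@In_filter_mem _ _ (fun L => rgt (key L)) (fun L => isPar L) ls _ HL).
Qed.

Lemma lbl_full ls n s : s \in T_lbl ls n -> s \in S_full ls.
Proof.
case: n => [k|p] /=; last exact: labelOf_full.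
case: (producer ls k) => [L|] //; case/flatten_mapP => x _; exact: labelOf_full.
Qed.

Lemma labelOf_l ls l r c : uniq (allprems ls) -> List.In (ParL l r c) ls -> labelOf ls l = [:: ell c].
Proof. by move=> Hp HL; rewrite /labelOf (cons_of Hp HL) ?eqxx //= mem_head. Qed.

Lemma labelOf_r ls l r c : uniq (allprems ls) -> List.In (ParL l r c) ls -> labelOf ls r = [:: rgt c].
Proof.
move=> Hp HL; have := prems_uniq_of Hp HL; rewrite /= in_cons orbF andbT => ne.
by rewrite /labelOf (cons_of Hp HL) /= ?in_cons ?eqxx ?orbT // eq_sym (negbTE ne).
Qed.

Lemma lbl_node ls x s : uniq (occs ls) -> x \in occs ls -> s \in labelOf ls x ->
  s \in T_lbl ls (node_for ls x).
Proof.
move=> Hu Hx Hs; case: (node_phi Hu Hx) => [[P [HP _ _ -> _]]|[P [HP HnP -> _ xc]]] //=.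
rewrite (prod_of Hu HP (key_concl P)); apply/flatten_mapP; by exists x.
Qed.

Lemma node_LN ls x : uniq (occs ls) -> x \in occs ls -> is_par_prem ls x -> node_for ls x \in T_LN ls.
Proof.
move=> Hu Hx Hq; case: (node_phi Hu Hx) => [[P [HP HpP kP -> _]]|[P [HP HnP -> _ xc]]].
  by rewrite -{1}kP; apply: LN_par => //; rewrite kP.
exact: LN_nonpar.
Qed.

Lemma holder_uniq ls l r c n : uniq (occs ls) -> uniq (allprems ls) -> List.In (ParL l r c) ls ->
  n \in T_LN ls -> rgt c \in T_lbl ls n -> n = node_for ls r.
Proof.
move=> Hu Hp HL.
have key1 : forall x, rgt c \in labelOf ls x -> x = r.
  move=> x; rewrite /labelOf; case E: (consumer ls x) => [[a b|l' r' c'|l' r' c']|] //.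
  have [HL' xp] := cons_In E.
  case: ifP => // xl; rewrite in_cons orbF => /eqP [ec]; subst c'.
  have ee := occs_uniq_link Hu HL HL' (mem_head _ _) (mem_head _ _); case: ee => E1 E2; subst l' r'.
  by move: xp; rewrite /prems !in_cons xl /= orbF => /eqP.
case/LN_inv => [[L [HL1 HnP ->]]|[L [HL1 HP HQ ->]]] /=.
  rewrite (prod_of Hu HL1 (key_concl L)) => /flatten_mapP [x xc /key1 xr]; subst x.
  rewrite /node_for (prod_of Hu HL1 xc); by case: L HL1 HnP xc.
move/key1 => E; rewrite /node_for -E (prod_of Hu HL1 (key_concl L)).
by case: L HL1 HP HQ E.
Qed.

Lemma uniq_key_filter ls (p : pred link) : uniq (occs ls) -> uniq [seq key L | L <- ls & p L].
Proof.
elim: ls => //= L ls IH; rewrite /occs /= cat_uniq -/(occs ls) => /and3P [_ Hd Hu].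
case: ifP => _ /=; rewrite IH // andbT.
apply/negP => H; case: (map_In H) => L' [H' E]; case: (In_filter H') => HL' _.
have ko : key L \in occs ls by apply/mem_occs; exists L'; rewrite E key_concl.
by move/hasPn: Hd => /(_ _ ko); rewrite /= key_concl.
Qed.



Definition TT ls := mkT (T_LN ls) (T_lbl ls) (T_PN ls) (T_up ls) (T_down ls) (T_ladj ls).

Lemma up_par ls l r c : uniq (occs ls) -> List.In (ParL l r c) ls -> T_up ls c = node_for ls l.
Proof. by move=> Hu HL; rewrite /T_up (@prod_of _ (ParL l r c)) //= mem_head. Qed.

Lemma down_tens ls l r c z : uniq (allprems ls) -> List.In (TensL l r c) ls -> z \in [:: l; r] ->
  T_down ls z = Some (inl c).
Proof. by move=> Hp HL Hz; rewrite /T_down (cons_of Hp HL Hz). Qed.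

Lemma down_par ls l r c z : uniq (allprems ls) -> List.In (ParL l r c) ls -> z \in [:: l; r] ->
  T_down ls z = Some (inr z).
Proof. by move=> Hp HL Hz; rewrite /T_down (cons_of Hp HL Hz). Qed.

Lemma ppp ls l r c z : uniq (allprems ls) -> List.In (ParL l r c) ls -> z \in [:: l; r] ->
  is_par_prem ls z.
Proof. by move=> Hp HL Hz; rewrite /is_par_prem (cons_of Hp HL Hz). Qed.

Lemma CR_map2 (R : nat -> nat -> Prop) (e : V -> V -> bool) (f : nat -> V) x y :
  (forall u w, R u w -> CR e (f u) (f w)) -> clos_refl_sym_trans nat R x y -> CR e (f x) (f y).
Proof.
move=> H; elim=> {x y}.
- by move=> x y /H.
- by move=> x; apply: rst_refl.
- by move=> x y _ IH; apply: rst_sym.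
- by move=> x y z _ IH1 _ IH2; apply: rst_trans IH2.
Qed.

Lemma init_conn ls lab : proof_structure ls lab -> is_net lab ls -> Conn (TT ls).
Proof.
move=> PS net; have [Hu Hp Ha Ht] := PS.
move=> sg Hv x y Hx Hy.
pose e := Eg (TT ls) sg.
pose s := fun c => sg c == T_up ls c.
have parE : forall l r c z, List.In (ParL l r c) ls -> z \in [:: l; r] -> sg c = node_for ls z ->
    CR e (inr c) (phi ls z).
  move=> l r c z HL zin E.
  have zo := prems_occ PS HL zin.
  have cP : c \in T_PN ls by apply: (@PN_of _ (ParL l r c)).
  case: (node_phi Hu zo) => [[P [HP HPP kP En ->]]|[P [HP HnP En -> _]]].
  - apply: (@rst_trans _ _ _ (inl (inr z))).
      by apply: rst_step; rewrite /e /= cP /= E En eqxx orbT.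
    apply: rst_sym; apply: rst_step; rewrite /e /=.
    have zP : z \in T_PN ls by rewrite -kP; apply: PN_of.
    by rewrite zP (down_par Hp HL zin) eqxx.
  - by apply: rst_step; rewrite /e /= cP /= E En eqxx orbT.
have tensE : forall l r c z, List.In (TensL l r c) ls -> z \in [:: l; r] ->
    CR e (phi ls z) (phi ls c).
  move=> l r c z HL zin.
  have zo := prems_occ PS HL zin.
  rewrite (@phi_concl _ (TensL l r c) c) //= ?mem_head //.
  case: (node_phi Hu zo) => [[P [HP HPP kP En ->]]|[P [HP HnP En -> zc]]].
  - apply: rst_step; rewrite /e /=.
    have zP : z \in T_PN ls by rewrite -kP; apply: PN_of.
    by rewrite zP (down_tens Hp HL zin) eqxx.
  - apply: rst_step; rewrite /e /=; apply/orP; left; apply/hasP; exists z => //.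
    by rewrite (cons_of Hp HL zin) (prod_of Hu HP zc) HnP !eqxx.
have edgeE : forall L u w, List.In L ls -> drL s L u w -> CR e (phi ls u) (phi ls w).
  move=> L u w HL; case: L HL => [a b|l r c|l r c] HL /=.
  - have pa : forall z, z \in [:: a; b] -> phi ls z = inl (inl a).
      by move=> z zin; rewrite (@phi_concl _ (IDL a b)).
    have ain : a \in [:: a; b] by rewrite mem_head.
    have bin : b \in [:: a; b] by rewrite !in_cons eqxx orbT.
    by case/orP => /andP [/eqP -> /eqP ->]; rewrite !pa //; apply: rst_refl.
  - have lin : l \in [:: l; r] by rewrite mem_head.
    have rin : r \in [:: l; r] by rewrite !in_cons eqxx orbT.
    case/orP => /andP [/eqP -> /orP [] /eqP ->].
    + by apply: rst_sym; apply: tensE HL lin.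
    + by apply: rst_sym; apply: tensE HL rin.
    + by apply: tensE HL lin.
    + by apply: tensE HL rin.
  - have lin : l \in [:: l; r] by rewrite mem_head.
    have rin : r \in [:: l; r] by rewrite !in_cons eqxx orbT.
    have pc : phi ls c = inr c by apply: phi_par HL.
    have key2 : CR e (inr c) (phi ls (if s c then l else r)).
      rewrite /s; case: eqP => [E|/eqP ne].
        by apply: (parE _ _ _ _ HL lin); rewrite E (up_par Hu HL).
      have cP : c \in T_PN ls by apply: (@PN_of _ (ParL l r c)).
      case: (Hv c cP) => [/= E|[/= H1 H2]]; first by rewrite E eqxx in ne.
      by apply: (parE _ _ _ _ HL rin); apply: (holder_uniq Hu Hp HL).
    by case/orP => /andP [/eqP -> /eqP ->]; rewrite pc //; apply: rst_sym.
have cov : forall v, verts (TT ls) v -> exists2 z, z \in occs ls & CR e (phi ls z) v.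
  case=> [n|c] /=.
  - case/LN_inv => [[L [HL HnP ->]]|[L [HL HP HQ ->]]].
      exists (key L); first by apply/mem_occs; exists L; rewrite key_concl.
      by rewrite (phi_concl Hu HL (key_concl L) HnP); apply: rst_refl.
    case: L HL HP HQ => // l r c HL _ HQ /=.
    exists c; first by apply/mem_occs; exists (ParL l r c); rewrite /= mem_head.
    rewrite (phi_par Hu HL); apply: rst_step; rewrite /e /=.
    have cP : c \in T_PN ls by apply: (@PN_of _ (ParL l r c)).
    move: HQ; rewrite /is_par_prem cP /T_down.
    by case: (consumer ls c) => [[]|] //= *; rewrite eqxx.
  - move=> cP; case: (PN_inv cP) => l [r HL].
    exists c; first by apply/mem_occs; exists (ParL l r c); rewrite /= mem_head.
    by rewrite (phi_par Hu HL); apply: rst_refl.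
case: (cov _ Hx) => zx zxo Cx; case: (cov _ Hy) => zy zyo Cy.
apply: (@rst_trans _ _ _ (phi ls zx)); first by apply: rst_sym.
apply: (@rst_trans _ _ _ (phi ls zy)); last by [].
apply: (@CR_map2 (dr s ls)) => [u w [L [HL H]]|]; first exact: edgeE HL H.
exact: net_conn net s zx zy zxo zyo.
Qed.

Lemma init_inv ls lab : proof_structure ls lab -> is_net lab ls -> InvT ls (TT ls).
Proof.
move=> PS net; have [Hu Hp Ha Ht] := PS.
have parprem : forall l r c z, List.In (ParL l r c) ls -> z \in [:: l; r] ->
    z \in occs ls /\ is_par_prem ls z.
  move=> l r c z HL Hz; split; [exact: (prems_occ PS HL Hz)|exact: (ppp Hp HL Hz)].
constructor => /=.
-
  rewrite /T_LN cat_uniq; apply/and3P; split.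
  + have -> : [seq inl (key L) | L <- ls & ~~ isPar L] = map inl [seq key L | L <- ls & ~~ isPar L] :> seq nid
      by rewrite -map_comp.
    rewrite (map_inj_uniq (fun x y (H : inl x = inl y :> nid) => ltac:(by case: H))).
    exact: (uniq_key_filter _ Hu).
  + apply/hasPn => n H; case: (map_In H) => L [_ ->]; apply/negP => H2.
    by case: (map_In H2) => L' [_].
  + have -> : [seq inr (key L) | L <- ls & isPar L && is_par_prem ls (key L)] =
        map inr [seq key L | L <- ls & isPar L && is_par_prem ls (key L)] :> seq nid
      by rewrite -map_comp.
    rewrite (map_inj_uniq (fun x y (H : inr x = inr y :> nid) => ltac:(by case: H))).
    exact: (uniq_key_filter _ Hu).
- move=> c /PN_inv [l [r HL]]; rewrite (up_par Hu HL).
  have [lo lq] := parprem _ _ _ l HL (mem_head _ _).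
  by apply: lbl_node => //; rewrite (labelOf_l Hp HL) mem_head.
- move=> s; split; last by case=> n _; apply: lbl_full.
  rewrite /S_full mem_cat => /orP [] H; case: (map_In H) => L [H' ->];
    case: (In_filter H') => HL HP; case: L HL HP H H' => // l r c HL _ _ _ /=.
  + have [lo lq] := parprem _ _ _ l HL (mem_head _ _).
    exists (node_for ls l); first exact: node_LN.
    by apply: lbl_node => //; rewrite (labelOf_l Hp HL) mem_head.
  + have rin : r \in [:: l; r] by rewrite !in_cons eqxx orbT.
    have [ro rq] := parprem _ _ _ r HL rin.
    exists (node_for ls r); first exact: node_LN.
    by apply: lbl_node => //; rewrite (labelOf_r Hp HL) mem_head.
- move=> c /PN_inv [l [r HL]]; rewrite /S_full mem_cat; apply/orP; right.
  exact: (@In_filter_mem _ _ (fun L => rgt (key L)) (fun L => isPar L) ls _ HL).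
- move=> u v; rewrite /T_ladj; apply: eq_has => x.
  case: (consumer ls x) => [[a b|l r t|l r t]|] //; case: (producer ls x) => // L.
  by rewrite orbC.
- move=> u v /hasP [x xo]; case E1: (consumer ls x) => [[a b|l r t|l r t]|] //.
  case E2: (producer ls x) => [L|] //; case/andP => HnP.
  have [HL _] := prod_In E2; have [HT _] := cons_In E1.
  case/orP => /andP [E3 E4]; first by rewrite (eqP E3); exact: LN_nonpar.
  by rewrite (eqP E4); apply: (@LN_nonpar _ (TensL l r t)).
- move=> c m /PN_inv [l [r HL]]; rewrite /T_down.
  case E1: (consumer ls c) => [[a b|l' r' t|l' r' c']|] // [<-].
    have [HT _] := cons_In E1; by apply: (@LN_nonpar _ (TensL l' r' t)).
  by apply: (@LN_par _ (ParL l r c)) => //; rewrite /is_par_prem E1.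
- exact: (init_conn PS net).
Qed.


Lemma TT_eq ls : (forall a b, ls <> [:: IDL a b]) -> T_tree ls = TT ls.
Proof.
case: ls => [|L [|L' ls]] // H; case: L H => // a b H; by case: (H a b).
Qed.

Lemma single_inv a b : InvT [:: IDL a b] (T_tree [:: IDL a b]).
Proof.
constructor => //=.
- by move=> s; split => // [[n]].
- move=> sg _ [[u|u]|L] [[v|v]|L'] //=; rewrite ?in_cons ?orbF;
    move=> /eqP [->] /eqP [->]; apply: rst_refl.
Qed.

Theorem lemma1 (ls : seq link) (lab : nat -> formula) :
  proof_structure ls lab -> algoA_no_at_step5 ls -> ~ is_net lab ls.
Proof.
move=> PS [_ [a0 [t [a [J [a0L R St NA]]]]]] net.
have I0 : InvT ls (T_tree ls).
  have [[a' [b' E]]|NE] : (exists a' b', ls = [:: IDL a' b']) \/ (forall a' b', ls <> [:: IDL a' b']).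
    case: ls {PS R St NA a0L net} => [|L [|L' ls]]; try by right.
    by case: L => [a' b'|? ? ?|? ? ?]; [left; exists a', b'|right|right].
  - by subst ls; apply: single_inv.
  - by rewrite TT_eq //; apply: (init_inv PS net).
have [It aL] := run_inv I0 a0L R.
by apply: NA; apply: (stuck_accept It aL St).
Qed.
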